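(* Suppose $T\in\mathcal B(\mathcal H)$ is quasitriangular and $\{P_n\}$ is a filtration with $\|(I-P_n)TP_n\|\to0$. Let $T_n=P_nT|_{P_n\mathcal H}$, an operator on the finite-dimensional space $P_n\mathcal H$. Then $j_{T_n}(\lambda)\to j_T(\lambda)$ for every $\lambda\in\mathbb C$.
   Context: $\mathcal H$ is a complex separable Hilbert space. For an operator $A$ on a Hilbert space $\mathcal K$, $j_A(z)=\inf\{\|(A-z)h\|:h\in\mathcal K,\|h\|=1\}$. A filtration is a sequence $\{P_n\}$ of finite-rank orthogonal projections with $\operatorname{Ran}P_n\subseteq\operatorname{Ran}P_{n+1}$ and $\bigcup_n\operatorname{Ran}P_n$ dense in $\mathcal H$. $T$ is quasitriangular if there is a filtration $\{P_n\}$ with $\|(I-P_n)TP_n\|\to0$. *)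

(* Defs.v *)
From Stdlib Require Import Reals ClassicalEpsilon.
Open Scope R_scope.

Record Cplx := mkC { re : R; im : R }.
Definition C0 : Cplx := mkC 0 0.
Definition C1 : Cplx := mkC 1 0.
Definition Cadd (a b : Cplx) : Cplx := mkC (re a + re b) (im a + im b).
Definition Cmul (a b : Cplx) : Cplx :=
  mkC (re a * re b - im a * im b) (re a * im b + im a * re b).
Definition Cconj (a : Cplx) : Cplx := mkC (re a) (- im a).

Record Hilbert := {
  carrier :> Type;
  vzero : carrier;
  vadd : carrier -> carrier -> carrier;
  vscal : Cplx -> carrier -> carrier;
  inner : carrier -> carrier -> Cplx;
  vadd_assoc : forall x y z, vadd x (vadd y z) = vadd (vadd x y) z;
  vadd_comm : forall x y, vadd x y = vadd y x;
  vadd_zero : forall x, vadd x vzero = x;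
  vadd_opp : forall x, vadd x (vscal (mkC (-1) 0) x) = vzero;
  vscal_one : forall x, vscal C1 x = x;
  vscal_assoc : forall a b x, vscal a (vscal b x) = vscal (Cmul a b) x;
  vscal_addv : forall a x y, vscal a (vadd x y) = vadd (vscal a x) (vscal a y);
  vscal_adds : forall a b x, vscal (Cadd a b) x = vadd (vscal a x) (vscal b x);
  inner_add : forall x y z, inner (vadd x y) z = Cadd (inner x z) (inner y z);
  inner_scal : forall a x y, inner (vscal a x) y = Cmul a (inner x y);
  inner_conj : forall x y, inner y x = Cconj (inner x y);
  inner_pos : forall x, 0 <= re (inner x x);
  inner_def : forall x, re (inner x x) = 0 -> x = vzero;
  hcomplete : forall u : nat -> carrier,
    (forall eps, eps > 0 -> exists N, forall m n, (m >= N)%nat -> (n >= N)%nat ->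
       sqrt (re (inner (vadd (u m) (vscal (mkC (-1) 0) (u n)))
                       (vadd (u m) (vscal (mkC (-1) 0) (u n))))) < eps) ->
    exists l, forall eps, eps > 0 -> exists N, forall n, (n >= N)%nat ->
       sqrt (re (inner (vadd (u n) (vscal (mkC (-1) 0) l))
                       (vadd (u n) (vscal (mkC (-1) 0) l)))) < eps;
  hseparable : exists d : nat -> carrier, forall x eps, eps > 0 ->
    exists k, sqrt (re (inner (vadd x (vscal (mkC (-1) 0) (d k)))
                              (vadd x (vscal (mkC (-1) 0) (d k))))) < eps
}.

Arguments vzero {h}.
Arguments vadd {h}.
Arguments vscal {h}.
Arguments inner {h}.

Definition vsub {H : Hilbert} (x y : H) : H := vadd x (vscal (mkC (-1) 0) y).
Definition hnorm {H : Hilbert} (x : H) : R := sqrt (re (inner x x)).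

Definition is_glb (S : R -> Prop) (m : R) : Prop :=
  (forall x, S x -> m <= x) /\ (forall b, (forall x, S x -> b <= x) -> b <= m).
Definition Rinf (S : R -> Prop) : R :=
  epsilon (inhabits 0) (fun m => is_glb S m).

Definition linear_op {H : Hilbert} (A : H -> H) : Prop :=
  (forall x y, A (vadd x y) = vadd (A x) (A y)) /\
  (forall a x, A (vscal a x) = vscal a (A x)).

Definition bounded_op {H : Hilbert} (A : H -> H) : Prop :=
  linear_op A /\ exists M, forall x, hnorm (A x) <= M * hnorm x.

Definition opnorm {H : Hilbert} (A : H -> H) : R :=
  Rinf (fun c => 0 <= c /\ forall x, hnorm (A x) <= c * hnorm x).

Definition Ran {H : Hilbert} (P : H -> H) (v : H) : Prop := exists x, v = P x.

Definition orth_proj {H : Hilbert} (P : H -> H) : Prop :=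
  linear_op P /\ (forall x, P (P x) = P x) /\
  (forall x y, inner (P x) y = inner x (P y)).

Fixpoint lincomb {H : Hilbert} (n : nat) (c : nat -> Cplx) (d : nat -> H) : H :=
  match n with
  | O => vzero
  | S k => vadd (lincomb k c d) (vscal (c k) (d k))
  end.

Definition finite_rank {H : Hilbert} (P : H -> H) : Prop :=
  exists (n : nat) (d : nat -> H), forall x, exists c, P x = lincomb n c d.

Definition filtration {H : Hilbert} (P : nat -> H -> H) : Prop :=
  (forall n, orth_proj (P n) /\ finite_rank (P n)) /\
  (forall n v, Ran (P n) v -> Ran (P (S n)) v) /\
  (forall x eps, eps > 0 -> exists n v, Ran (P n) v /\ hnorm (vsub x v) < eps).

Definition quasitriangular {H : Hilbert} (T : H -> H) : Prop :=
  exists P : nat -> H -> H, filtration P /\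
    Un_cv (fun n => opnorm (fun x => vsub (T (P n x)) (P n (T (P n x))))) 0.

Definition jfun {H : Hilbert} (T : H -> H) (z : Cplx) : R :=
  Rinf (fun r => exists h : H, hnorm h = 1 /\ r = hnorm (vsub (T h) (vscal z h))).

(* j_{T_n}(z) for T_n = P T |_{Ran P}, acting on the finite-dimensional space Ran P *)
Definition jfun_compression {H : Hilbert} (P T : H -> H) (z : Cplx) : R :=
  Rinf (fun r => exists h : H, Ran P h /\ hnorm h = 1 /\
                   r = hnorm (vsub (P (T h)) (vscal z h))).

(* Main.v *)
Require Import Defs.
From Stdlib Require Import Reals Lra Psatz Classical ClassicalEpsilon.
Open Scope R_scope.

Notation m1 := (mkC (-1) 0).
Definition vneg {H : Hilbert} (x : H) : H := vscal m1 x.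

Lemma Ceq (a b : Cplx) : re a = re b -> im a = im b -> a = b.
Proof. destruct a, b; simpl; intros; subst; reflexivity. Qed.

Lemma Cmul_comm (a b : Cplx) : Cmul a b = Cmul b a.
Proof. apply Ceq; simpl; ring. Qed.

Lemma vadd0l {H : Hilbert} (x : H) : vadd vzero x = x.
Proof. rewrite vadd_comm; apply vadd_zero. Qed.

Lemma vaddN {H : Hilbert} (x : H) : vadd x (vneg x) = vzero.
Proof. apply vadd_opp. Qed.

Lemma vaddNl {H : Hilbert} (x : H) : vadd (vneg x) x = vzero.
Proof. rewrite vadd_comm; apply vadd_opp. Qed.

Lemma vadd_cancel {H : Hilbert} (x y : H) : vadd x y = x -> y = vzero.
Proof.
  intro E. assert (E2 : vadd (vneg x) (vadd x y) = vadd (vneg x) x) by now rewrite E.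
  rewrite vadd_assoc, vaddNl, vadd0l in E2. exact E2.
Qed.

Lemma vscal0 {H : Hilbert} (x : H) : vscal Defs.C0 x = vzero.
Proof.
  apply (vadd_cancel (vscal Defs.C0 x)). rewrite <- vscal_adds.
  f_equal. apply Ceq; simpl; ring.
Qed.

Lemma vscal_zero {H : Hilbert} (a : Cplx) : vscal a (@vzero H) = vzero.
Proof.
  apply (vadd_cancel (vscal a (@vzero H))). rewrite <- vscal_addv, vadd_zero. reflexivity.
Qed.

Lemma vneg_vneg {H : Hilbert} (x : H) : vneg (vneg x) = x.
Proof.
  unfold vneg. rewrite vscal_assoc.
  assert (E : Cmul m1 m1 = Defs.C1) by (apply Ceq; simpl; ring). rewrite E. apply vscal_one.
Qed.

Lemma vneg_add {H : Hilbert} (x y : H) : vneg (vadd x y) = vadd (vneg x) (vneg y).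
Proof. apply vscal_addv. Qed.

Lemma scal_comm {H : Hilbert} (a b : Cplx) (x : H) : vscal a (vscal b x) = vscal b (vscal a x).
Proof. rewrite !vscal_assoc, Cmul_comm; reflexivity. Qed.

Lemma vadd_swap {H : Hilbert} (a b c : H) : vadd a (vadd b c) = vadd b (vadd a c).
Proof. rewrite !vadd_assoc, (vadd_comm _ a b); reflexivity. Qed.

Lemma vadd_4 {H : Hilbert} (a b c d : H) :
  vadd (vadd a b) (vadd c d) = vadd (vadd a c) (vadd b d).
Proof. rewrite <- !vadd_assoc. f_equal. apply vadd_swap. Qed.

Lemma vsub_add_cancel {H : Hilbert} (x y : H) : vadd y (vsub x y) = x.
Proof. unfold vsub. rewrite vadd_swap. fold (vneg y). rewrite vaddN, vadd_zero. reflexivity. Qed.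

Lemma lin_neg {H : Hilbert} (A : H -> H) : linear_op A -> forall x, A (vneg x) = vneg (A x).
Proof. intros [_ L] x. apply L. Qed.

Lemma lin_sub {H : Hilbert} (A : H -> H) : linear_op A -> forall x y, A (vsub x y) = vsub (A x) (A y).
Proof. intros L x y. unfold vsub. rewrite (proj1 L). fold (vneg y). rewrite lin_neg by auto. reflexivity. Qed.

Lemma inner_add_r {H : Hilbert} (x y z : H) : inner x (vadd y z) = Cadd (inner x y) (inner x z).
Proof.
  rewrite inner_conj, inner_add, (inner_conj _ y x), (inner_conj _ z x).
  apply Ceq; simpl; ring.
Qed.

Lemma inner_scal_r {H : Hilbert} (a : Cplx) (x y : H) : inner x (vscal a y) = Cmul (Cconj a) (inner x y).
Proof.
  rewrite inner_conj, inner_scal, (inner_conj _ y x). apply Ceq; simpl; ring.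
Qed.

Lemma im_inner_self {H : Hilbert} (x : H) : im (inner x x) = 0.
Proof. pose proof (f_equal im (inner_conj _ x x)) as E. simpl in E. lra. Qed.

Definition nsq {H : Hilbert} (x : H) : R := re (inner x x).

Lemma nsq_add {H : Hilbert} (x y : H) : nsq (vadd x y) = nsq x + nsq y + 2 * re (inner x y).
Proof.
  unfold nsq. rewrite inner_add, !inner_add_r. simpl.
  rewrite (inner_conj _ x y). simpl. ring.
Qed.

Lemma nsq_scal {H : Hilbert} (a : Cplx) (x : H) : nsq (vscal a x) = (re a * re a + im a * im a) * nsq x.
Proof.
  unfold nsq. rewrite inner_scal, inner_scal_r. simpl.
  pose proof (im_inner_self x). rewrite H0. ring.
Qed.

Lemma re_inner_scal_l {H : Hilbert} (t : R) (x y : H) : re (inner (vscal (mkC t 0) x) y) = t * re (inner x y).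
Proof. rewrite inner_scal. simpl. ring. Qed.

Lemma nsq_pos {H : Hilbert} (x : H) : 0 <= nsq x.
Proof. apply inner_pos. Qed.

Lemma hnorm_sq {H : Hilbert} (x : H) : hnorm x * hnorm x = nsq x.
Proof. unfold hnorm. apply sqrt_sqrt, inner_pos. Qed.

Lemma hnorm_pos {H : Hilbert} (x : H) : 0 <= hnorm x.
Proof. apply sqrt_pos. Qed.

Lemma quad_disc (a b c : R) : 0 <= c -> (forall t, 0 <= a + 2 * b * t + c * t * t) -> b * b <= a * c.
Proof.
  intros Hc Ht. destruct (Rle_lt_or_eq_dec 0 c Hc) as [Hc'|Hc'].
  - specialize (Ht (- b / c)).
    assert (E : a + 2 * b * (- b / c) + c * (- b / c) * (- b / c) = (a * c - b * b) / c)
      by (field; lra).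
    rewrite E in Ht. apply Rmult_le_compat_r with (r := c) in Ht; [|lra].
    unfold Rdiv in Ht. rewrite Rmult_assoc, Rinv_l, Rmult_1_r in Ht by lra. lra.
  - subst c. destruct (Req_dec b 0) as [->|Hb]; [lra|].
    specialize (Ht (- (a + 1) / (2 * b))).
    assert (E : a + 2 * b * (- (a + 1) / (2 * b)) + 0 * (- (a + 1) / (2 * b)) * (- (a + 1) / (2 * b)) = -1)
      by (field; lra). lra.
Qed.

Lemma cauchy_schwarz {H : Hilbert} (x y : H) : re (inner x y) <= hnorm x * hnorm y.
Proof.
  assert (D : re (inner x y) * re (inner x y) <= nsq x * nsq y).
  { apply quad_disc; [apply nsq_pos|]. intro t.
    pose proof (nsq_pos (vadd x (vscal (mkC t 0) y))) as P.
    rewrite nsq_add, nsq_scal in P. simpl in P.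
    rewrite inner_scal_r in P. simpl in P. unfold nsq in P |- *. nra. }
  rewrite <- hnorm_sq, <- (hnorm_sq y) in D.
  pose proof (hnorm_pos x). pose proof (hnorm_pos y).
  destruct (Rle_or_lt (re (inner x y)) 0); [nra|].
  apply Rsqr_incr_0_var; unfold Rsqr; nra.
Qed.

Lemma triangle {H : Hilbert} (x y : H) : hnorm (vadd x y) <= hnorm x + hnorm y.
Proof.
  pose proof (cauchy_schwarz x y). pose proof (hnorm_pos x). pose proof (hnorm_pos y).
  pose proof (hnorm_pos (vadd x y)).
  apply Rsqr_incr_0_var; unfold Rsqr; [|nra].
  rewrite hnorm_sq, nsq_add, <- !hnorm_sq. nra.
Qed.

Lemma hnorm_scal {H : Hilbert} (a : Cplx) (x : H) : hnorm (vscal a x) = sqrt (re a * re a + im a * im a) * hnorm x.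
Proof. unfold hnorm. fold (nsq (vscal a x)). rewrite nsq_scal, sqrt_mult; [reflexivity|nra|apply nsq_pos]. Qed.

Lemma hnorm_neg {H : Hilbert} (x : H) : hnorm (vneg x) = hnorm x.
Proof. unfold vneg. rewrite hnorm_scal. simpl. replace (-1 * -1 + 0 * 0) with 1 by ring. rewrite sqrt_1; ring. Qed.

Lemma triangle_sub {H : Hilbert} (x y : H) : hnorm (vsub x y) <= hnorm x + hnorm y.
Proof. unfold vsub. fold (vneg y). rewrite <- (hnorm_neg y). apply triangle. Qed.

Lemma hnorm_sub_sym {H : Hilbert} (x y : H) : hnorm (vsub x y) = hnorm (vsub y x).
Proof.
  rewrite <- hnorm_neg. unfold vsub. fold (vneg y). fold (vneg x).
  rewrite vneg_add, vneg_vneg, vadd_comm. reflexivity.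
Qed.

Lemma hnorm_zero_iff {H : Hilbert} (x : H) : hnorm x = 0 -> x = vzero.
Proof.
  intro E. apply inner_def. pose proof (hnorm_sq x). unfold nsq in H0. rewrite E in H0. lra.
Qed.

Lemma hnorm_vzero {H : Hilbert} : hnorm (@vzero H) = 0.
Proof. rewrite <- (vscal0 (@vzero H)), hnorm_scal. simpl. replace (0 * 0 + 0 * 0) with 0 by ring. rewrite sqrt_0. ring. Qed.

Lemma pythag {H : Hilbert} (x y : H) : re (inner x y) = 0 -> hnorm (vadd x y) * hnorm (vadd x y) = hnorm x * hnorm x + hnorm y * hnorm y.
Proof. intro O. rewrite !hnorm_sq, nsq_add, O. ring. Qed.

Lemma glb_exists (S : R -> Prop) : (exists x, S x) -> (forall x, S x -> 0 <= x) -> is_glb S (Rinf S).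
Proof.
  intros [x0 Hx0] Hpos.
  assert (Ex : exists m, is_glb S m).
  { destruct (completeness (fun y => S (- y))) as [m [Hub Hlub]].
    - exists 0. intros y Hy. apply Hpos in Hy. lra.
    - exists (- x0). rewrite Ropp_involutive. exact Hx0.
    - exists (- m). split.
      + intros x Sx.
        assert (- x <= m); [|lra]. apply Hub. rewrite Ropp_involutive. exact Sx.
      + intros b Hb. assert (m <= - b); [|lra]. apply Hlub. intros y Sy. apply Hb in Sy. lra. }
  unfold Rinf. apply (epsilon_spec (inhabits 0) (fun m => is_glb S m) Ex).
Qed.

Lemma glb_le (S : R -> Prop) m x : is_glb S m -> S x -> m <= x.
Proof. intros [A _] Sx. auto. Qed.

Lemma glb_ge (S : R -> Prop) m b : is_glb S m -> (forall x, S x -> b <= x) -> b <= m.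
Proof. intros [_ B] Hb. auto. Qed.

Lemma glb_approx (S : R -> Prop) m eps : is_glb S m -> eps > 0 -> exists x, S x /\ x < m + eps.
Proof.
  intros G He. apply NNPP. intro N.
  assert (m + eps <= m); [|lra].
  apply (glb_ge S m); auto. intros x Sx. apply Rnot_lt_le. intro L. apply N. eauto.
Qed.

Lemma proj_ran {H : Hilbert} (P : H -> H) v : orth_proj P -> Ran P v -> P v = v.
Proof. intros [_ [I _]] [x ->]. apply I. Qed.

Lemma proj_orth {H : Hilbert} (P : H -> H) x y : orth_proj P -> re (inner (P x) (vsub y (P y))) = 0.
Proof.
  intros [L [I S]]. unfold vsub. rewrite inner_add_r, inner_scal_r, !S, I. simpl. ring.
Qed.

Lemma proj_decomp {H : Hilbert} (P : H -> H) x : orth_proj P ->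
  hnorm x * hnorm x = hnorm (P x) * hnorm (P x) + hnorm (vsub x (P x)) * hnorm (vsub x (P x)).
Proof.
  intro O. rewrite <- (pythag _ _ (proj_orth P x x O)). rewrite vsub_add_cancel. reflexivity.
Qed.

Lemma sq_le (a b : R) : 0 <= a -> 0 <= b -> a * a <= b * b -> a <= b.
Proof. intros. nra. Qed.

Lemma proj_norm_le {H : Hilbert} (P : H -> H) x : orth_proj P -> hnorm (P x) <= hnorm x.
Proof.
  intro O. pose proof (proj_decomp P x O). apply sq_le; try apply hnorm_pos.
  pose proof (hnorm_pos (vsub x (P x))). nra.
Qed.

Lemma proj_co_norm_le {H : Hilbert} (P : H -> H) x : orth_proj P -> hnorm (vsub x (P x)) <= hnorm x.
Proof.
  intro O. pose proof (proj_decomp P x O). apply sq_le; try apply hnorm_pos.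
  pose proof (hnorm_pos (P x)). nra.
Qed.

Lemma ran_mono {H : Hilbert} (P : nat -> H -> H) : filtration P ->
  forall n m v, (n <= m)%nat -> Ran (P n) v -> Ran (P m) v.
Proof.
  intros [_ [M _]] n m v Hnm. induction Hnm; auto.
Qed.

Lemma vsub_shift {H : Hilbert} (P : H -> H) x v : linear_op P -> P v = v ->
  vsub (vsub x v) (P (vsub x v)) = vsub x (P x).
Proof.
  intros L E. rewrite lin_sub by auto. rewrite E. unfold vsub.
  fold (vneg v). fold (vneg (P x)). fold (vneg (vadd (P x) (vneg v))).
  rewrite vneg_add, vneg_vneg. rewrite vadd_4, vaddNl, vadd_zero. reflexivity.
Qed.

Lemma strong_cv {H : Hilbert} (P : nat -> H -> H) : filtration P ->
  forall x eps, eps > 0 -> exists N, forall m, (m >= N)%nat -> hnorm (vsub x (P m x)) < eps.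
Proof.
  intros F x eps He. pose proof F as [Hp [_ D]].
  destruct (D x eps He) as [n [v [Rv Hv]]]. exists n. intros m Hm.
  assert (Rm : Ran (P m) v) by (apply (ran_mono P F n); auto).
  destruct (Hp m) as [O _].
  rewrite <- (vsub_shift (P m) x v (proj1 O) (proj_ran _ _ O Rm)).
  eapply Rle_lt_trans; [apply proj_co_norm_le; auto| exact Hv].
Qed.

Definition Wop {H : Hilbert} (T : H -> H) (l : Cplx) (x : H) : H := vsub (T x) (vscal l x).

Lemma scal_vsub {H : Hilbert} (c : Cplx) (a b : H) : vscal c (vsub a b) = vsub (vscal c a) (vscal c b).
Proof. unfold vsub. rewrite vscal_addv. fold (vneg b). unfold vneg. rewrite scal_comm. reflexivity. Qed.

Lemma W_lin {H : Hilbert} (T : H -> H) l g h : linear_op T ->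
  Wop T l (vsub g h) = vsub (Wop T l g) (Wop T l h).
Proof.
  intro L. unfold Wop. rewrite lin_sub by auto. rewrite scal_vsub.
  unfold vsub. fold (vneg (T h)). fold (vneg (vscal l h)). fold (vneg (vscal l g)).
  fold (vneg (vadd (vscal l g) (vneg (vscal l h)))).
  fold (vneg (vadd (T h) (vneg (vscal l h)))).
  rewrite !vneg_add, !vneg_vneg. apply vadd_4.
Qed.

Lemma hnorm_real_scal {H : Hilbert} (c : R) (x : H) : 0 <= c -> hnorm (vscal (mkC c 0) x) = c * hnorm x.
Proof. intro Hc. rewrite hnorm_scal. simpl. replace (c * c + 0 * 0) with (c * c) by ring.
  rewrite sqrt_square by auto. reflexivity. Qed.

Lemma normalize {H : Hilbert} (u : H) : 0 < hnorm u -> hnorm (vscal (mkC (/ hnorm u) 0) u) = 1.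
Proof.
  intro Hu. rewrite hnorm_real_scal. field. lra. left. apply Rinv_0_lt_compat. auto.
Qed.

Lemma jcomp_bound {H : Hilbert} (P T : H -> H) l u : orth_proj P -> linear_op T -> P u = u ->
  0 < hnorm u ->
  is_glb (fun r => exists h : H, Ran P h /\ hnorm h = 1 /\ r = hnorm (vsub (P (T h)) (vscal l h)))
     (jfun_compression P T l) /\
  jfun_compression P T l <= hnorm (Wop T l u) / hnorm u.
Proof.
  intros O LT Pu Hu. pose proof O as [LP _].
  set (c := / hnorm u). assert (Hc : 0 < c) by (apply Rinv_0_lt_compat; auto).
  set (e := vscal (mkC c 0) u).
  assert (Pe : P e = e) by (unfold e; rewrite (proj2 LP), Pu; reflexivity).
  assert (Ne : hnorm e = 1) by (apply normalize; auto).
  assert (Ve : vsub (P (T e)) (vscal l e) = vscal (mkC c 0) (P (Wop T l u))).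
  { unfold e, Wop. rewrite (proj2 LT), (proj2 LP), lin_sub by auto.
    rewrite (proj2 LP), Pu, scal_vsub, (scal_comm l). reflexivity. }
  assert (G : is_glb (fun r => exists h : H, Ran P h /\ hnorm h = 1 /\ r = hnorm (vsub (P (T h)) (vscal l h)))
     (jfun_compression P T l)).
  { apply glb_exists.
    - exists (hnorm (vsub (P (T e)) (vscal l e))). exists e. repeat split; auto. exists e; auto.
    - intros x [h [_ [_ ->]]]. apply hnorm_pos. }
  split; auto.
  eapply Rle_trans. apply (glb_le _ _ (hnorm (vsub (P (T e)) (vscal l e))) G).
  exists e. repeat split; auto. exists e; auto.
  rewrite Ve, hnorm_real_scal by lra.
  apply Rle_trans with (c * hnorm (Wop T l u)).
  - apply Rmult_le_compat_l; [lra|]. apply proj_norm_le; auto.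
  - unfold Rdiv, c. rewrite Rmult_comm. lra.
Qed.

Lemma ident1 {H : Hilbert} (p l t : H) : vadd (vsub p l) (vsub t p) = vsub t l.
Proof.
  rewrite vadd_comm. unfold vsub. fold (vneg p). fold (vneg l).
  rewrite <- vadd_assoc. f_equal. rewrite vadd_assoc, vaddNl, vadd0l. reflexivity.
Qed.

Lemma lower {H : Hilbert} (T P : H -> H) l M J (Sj : R -> Prop)
  (HM : forall x, hnorm (T x) <= M * hnorm x) (HM0 : 0 <= M) (LT : linear_op T) (O : orth_proj P)
  (GJ : is_glb (fun r => exists h : H, hnorm h = 1 /\ r = hnorm (vsub (T h) (vscal l h))) J)
  (G : is_glb (fun r => exists h : H, Ran P h /\ hnorm h = 1 /\ r = hnorm (vsub (P (T h)) (vscal l h)))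
     (jfun_compression P T l)) :
  J - opnorm (fun x => vsub (T (P x)) (P (T (P x)))) <= jfun_compression P T l.
Proof.
  pose proof O as [LP _].
  assert (GO : is_glb (fun c => 0 <= c /\ forall x, hnorm (vsub (T (P x)) (P (T (P x)))) <= c * hnorm x)
                 (opnorm (fun x => vsub (T (P x)) (P (T (P x)))))).
  { apply glb_exists.
    - exists M. split; auto. intro x. eapply Rle_trans. apply proj_co_norm_le; auto.
      eapply Rle_trans. apply HM. apply Rmult_le_compat_l; auto. apply proj_norm_le; auto.
    - intros x [? _]; auto. }
  apply (glb_ge _ _ _ G). intros r [h [Rh [Nh ->]]].
  pose proof (proj_ran P h O Rh) as Ph.
  set (b := vsub (T h) (P (T h))).
  assert (Hb : hnorm b <= opnorm (fun x => vsub (T (P x)) (P (T (P x))))).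
  { apply (glb_ge _ _ _ GO). intros c [_ Hc]. specialize (Hc h). rewrite Ph, Nh in Hc. fold b in Hc. lra. }
  assert (HJ : J <= hnorm (vsub (T h) (vscal l h))) by (apply (glb_le _ _ _ GJ); eauto).
  assert (E1 : vsub (P (T h)) (vscal l h) = P (Wop T l h)).
  { unfold Wop. rewrite lin_sub by auto. rewrite (proj2 LP), Ph. reflexivity. }
  assert (E2 : vsub (T h) (vscal l h) = vadd (vsub (P (T h)) (vscal l h)) b).
  { unfold b. rewrite ident1. reflexivity. }
  assert (Or : re (inner (vsub (P (T h)) (vscal l h)) b) = 0).
  { rewrite E1. unfold b. apply proj_orth; auto. }
  pose proof (pythag _ _ Or) as Py. rewrite <- E2 in Py.
  pose proof (hnorm_pos b). pose proof (hnorm_pos (vsub (P (T h)) (vscal l h))).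
  pose proof (hnorm_pos (vsub (T h) (vscal l h))).
  assert (hnorm (vsub (T h) (vscal l h)) <= hnorm (vsub (P (T h)) (vscal l h)) + hnorm b) by nra.
  lra.
Qed.

Theorem lemma3p2 (H : Hilbert) (T : H -> H) (P : nat -> H -> H)
  (Hnontriv : exists x : H, x <> vzero)
  (HT : bounded_op T)
  (Hqt : quasitriangular T)
  (HP : filtration P)
  (Hcv : Un_cv (fun n => opnorm (fun x => vsub (T (P n x)) (P n (T (P n x))))) 0) :
  forall lambda : Cplx,
    Un_cv (fun n => jfun_compression (P n) T lambda) (jfun T lambda).
Proof.
  intro l. destruct HT as [LT [M0 HM0]].
  set (M := Rmax M0 0).
  assert (HM0p : 0 <= M) by apply Rmax_r.
  assert (HM : forall x, hnorm (T x) <= M * hnorm x).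
  { intro x. eapply Rle_trans. apply HM0. apply Rmult_le_compat_r. apply hnorm_pos. apply Rmax_l. }
  set (J := jfun T l).
  assert (GJ : is_glb (fun r => exists h : H, hnorm h = 1 /\ r = hnorm (vsub (T h) (vscal l h))) J).
  { apply glb_exists.
    - destruct Hnontriv as [x Hx].
      assert (Px : 0 < hnorm x).
      { destruct (hnorm_pos x) as [|E]; auto. exfalso. apply Hx, hnorm_zero_iff. auto. }
      set (e := vscal (mkC (/ hnorm x) 0) x).
      exists (hnorm (vsub (T e) (vscal l e))). exists e. split; auto. apply normalize; auto.
    - intros r [h [_ ->]]. apply hnorm_pos. }
  assert (J0 : 0 <= J).
  { apply (glb_ge _ _ _ GJ). intros r [h [_ ->]]. apply hnorm_pos. }
  set (K := M + sqrt (re l * re l + im l * im l)).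
  assert (K0 : 0 <= K) by (unfold K; pose proof (sqrt_pos (re l * re l + im l * im l)); lra).
  assert (HW : forall x, hnorm (Wop T l x) <= K * hnorm x).
  { intro x. unfold Wop. eapply Rle_trans. apply triangle_sub. rewrite hnorm_scal.
    specialize (HM x). unfold K. lra. }
  intros eps Heps.
  destruct (glb_approx _ _ (eps / 4) GJ) as [a [[h [Nh Ea]] Ha]]; [lra|].
  set (d := eps / (4 * (K + J + eps + 1))).
  assert (Dpos : 0 < 4 * (K + J + eps + 1)) by lra.
  assert (d0 : 0 < d) by (unfold d; apply Rdiv_lt_0_compat; lra).
  assert (dK : d * (K + J + eps + 1) = eps / 4) by (unfold d; field; lra).
  assert (d1 : d < 1 / 4).
  { apply Rmult_lt_reg_r with (K + J + eps + 1); [lra|]. rewrite dK. lra. }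
  destruct (strong_cv P HP h d d0) as [N1 HN1].
  destruct (Hcv eps Heps) as [N2 HN2].
  exists (max N1 N2). intros n Hn.
  assert (Hn1 : (n >= N1)%nat) by lia. assert (Hn2 : (n >= N2)%nat) by lia.
  specialize (HN1 n Hn1). specialize (HN2 n Hn2).
  destruct HP as [Hpr _]. destruct (Hpr n) as [O _]. pose proof O as [LP [IP _]].
  set (g := P n h). set (dn := hnorm (vsub h g)).
  assert (Pg : P n g = g) by apply IP.
  assert (Tri : hnorm h <= hnorm g + dn).
  { unfold dn. rewrite <- (vsub_add_cancel h g) at 1. apply triangle. }
  assert (dn0 : 0 <= dn) by apply hnorm_pos.
  assert (HN1d : dn < d) by exact HN1.
  assert (gpos : 0 < hnorm g) by lra.
  assert (HWg : hnorm (Wop T l g) <= a + K * dn).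
  { rewrite <- (vsub_add_cancel (Wop T l g) (Wop T l h)), <- W_lin by auto.
    eapply Rle_trans. apply triangle. rewrite Ea. unfold Wop at 1. fold (Wop T l h).
    apply Rplus_le_compat_l. unfold dn. rewrite (hnorm_sub_sym h g). apply HW. }
  destruct (jcomp_bound (P n) T l g O LT Pg gpos) as [G Hj].
  pose proof (lower T (P n) l M J (fun _ => True) HM HM0p LT O GJ G) as Hl.
  assert (Up : hnorm (Wop T l g) / hnorm g <= J + eps / 2).
  { apply Rmult_le_reg_r with (hnorm g); auto.
    unfold Rdiv. rewrite Rmult_assoc, Rinv_l, Rmult_1_r by lra.
    assert (dn * (K + J + eps + 1) <= eps / 4) by (rewrite <- dK; apply Rmult_le_compat_r; lra).
    nra. }
  unfold R_dist in *. rewrite Rminus_0_r in HN2.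
  apply Rabs_def1; apply Rabs_def2 in HN2; destruct HN2; lra.
Qed.
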